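(* Let $p$ be a prime, let $t$ be a positive integer with $t\mid(p-1)$, let $Q\in\mathbb{F}_p[x,y]$, and let $$P(x,y)=f_n(x)y^n+\dots+f_1(x)y+f_0(x)\in\mathbb{F}_p[x,y]$$ be an irreducible polynomial of bidegree $(m,n)$ with $n\geqslant 1$ (so $f_n\neq 0$, $\deg f_i\leqslant m$). If $P(x,y)$ divides $Q(x,y^t)$ in $\mathbb{F}_p[x,y]$, then $P(x,0)^{\lfloor t/n\rfloor}$ divides $Q(x,0)$ in $\mathbb{F}_p[x]$.
   Context: $\lfloor s\rfloor$ denotes the integer part of a real number $s$. *)

(* Defs.v *)
(* Bivariate polynomials over a ring R are represented as
   {poly {poly R}}: the outer variable is y, coefficients are polynomials in x. *)
From HB Require Import structures.
From mathcomp Require Import all_boot all_order all_algebra.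
Set Implicit Arguments. Unset Strict Implicit. Unset Printing Implicit Defensive.
Import GRing.Theory.
Local Open Scope ring_scope.

Definition dvd2 (F : fieldType) (P Q : {poly {poly F}}) : Prop :=
  exists C : {poly {poly F}}, Q = P * C.

Definition irreducible2 (F : fieldType) (P : {poly {poly F}}) : Prop :=
  [/\ P != 0, P \isn't a GRing.unit &
      forall A B : {poly {poly F}}, P = A * B ->
        A \is a GRing.unit \/ B \is a GRing.unit].

(* Main.v *)
Require Import Defs.
From HB Require Import structures.
From mathcomp Require Import all_boot all_order all_algebra all_fingroup all_solvable all_field.
From mathcomp Require Import zify ring.
From Stdlib Require Import Classical.
Set Implicit Arguments. Unset Strict Implicit. Unset Printing Implicit Defensive.
Import GRing.Theory.
Local Open Scope ring_scope.

Lemma exists_prim_root (F : finFieldType) (t : nat) :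
  (0 < t)%N -> (t %| #|F|.-1)%N -> exists z : F, t.-primitive_root z.
Proof.
move=> t0 tdv.
pose rs := [seq x <- enum F | x != 0].
have h2 : (1 < #|F|)%N by rewrite (cardD1 0) (cardD1 1) !inE oner_neq0.
have hn : (0 < #|F|.-1)%N by rewrite -subn1 subn_gt0.
have : has (#|F|.-1).-primitive_root rs.
  apply: has_prim_root => //.
  - apply/allP=> x; rewrite mem_filter => /andP[xn0 _].
    rewrite unity_rootE; apply/eqP.
    have e : x ^+ #|F|.-1 * x = 1 * x.
      by rewrite -exprSr prednK ?expf_card ?mul1r // ltnW.
    exact: (mulIf xn0 e).
  - by rewrite filter_uniq // enum_uniq.
  - rewrite size_filter -(cardC1 (0:F)) cardE /enum_mem size_filter.
    by rewrite filter_predT.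
case/hasP=> g _ pg; exists (g ^+ (#|F|.-1 %/ t)); exact: dvdn_prim_root.
Qed.

Section Gauss.
Variable F : fieldType.
Notation R := {poly F}.

Lemma irr_euclid (q a b : R) : irreducible_poly q -> q %| a * b -> (q %| a) || (q %| b).
Proof.
move=> iq dab.
have [h|h] := irredp_XsubCP iq (dvdp_gcdl q a).
  have cp : coprimep q a by rewrite coprimep_def size_poly_eq1.
  by rewrite (Gauss_dvdpr _ cp) in dab; rewrite dab orbT.
by rewrite -(eqp_dvdl _ h) dvdp_gcdr.
Qed.

Definition cdvd (c : R) (A : {poly R}) := forall i, c %| A`_i.

Lemma decomp (A : {poly R}) : A = drop_poly 1 A * 'X + (A`_0)%:P.
Proof.
apply/polyP=> i; rewrite coefD coefMX coefC coef_drop_poly.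
by case: i => [|i] //=; rewrite ?add0r ?addr0 // addn1.
Qed.

Lemma cdvd_decomp (c : R) (A : {poly R}) :
  cdvd c (drop_poly 1 A) -> c %| A`_0 -> cdvd c A.
Proof.
move=> h0 h1 i; rewrite (decomp A) coefD coefMX coefC.
case: i => [|i] /=; first by rewrite add0r.
by rewrite addr0.
Qed.

Lemma E_step (q : R) (A B : {poly R}) :
  q %| A`_0 -> cdvd q (A * B) -> cdvd q (drop_poly 1 A * B).
Proof.
move=> h0 hAB i.
have := hAB i.+1.
rewrite {1}(decomp A) mulrDl coefD -mulrA (mulrC 'X) mulrA coefMX /= coefCM.
by rewrite dvdp_addl // dvdp_mulr.
Qed.

Lemma E_lemma (q : R) : irreducible_poly q ->
  forall A B : {poly R}, cdvd q (A * B) -> cdvd q A \/ cdvd q B.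
Proof.
move=> iq A B.
move: {2}(size A + size B)%N (leqnn (size A + size B)%N) => N.
elim: N A B => [|N IH] A B hN hAB.
  left=> i; move: hN; rewrite leqn0 addn_eq0 size_poly_eq0 => /andP[/eqP -> _].
  by rewrite coef0 dvdp0.
have [->|A0] := eqVneq A 0; first by left=> i; rewrite coef0 dvdp0.
have [->|B0] := eqVneq B 0; first by right=> i; rewrite coef0 dvdp0.
have := hAB 0%N; rewrite coef0M => /(irr_euclid iq) /orP [hA|hB].
  have hs : (size (drop_poly 1 A) + size B <= N)%N.
    rewrite size_drop_poly; rewrite -ltnS; apply: leq_trans hN.
    have : (0 < size A)%N by rewrite lt0n size_poly_eq0.
    lia.
  have [hA1|hB1] := IH _ _ hs (E_step hA hAB); last by right.
  by left; apply: cdvd_decomp.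
have hBA : cdvd q (B * A) by rewrite mulrC.
have hs : (size (drop_poly 1 B) + size A <= N)%N.
  rewrite size_drop_poly; rewrite -ltnS; apply: leq_trans hN.
  have : (0 < size B)%N by rewrite lt0n size_poly_eq0.
  lia.
have [hB1|hA1] := IH _ _ hs (E_step hB hBA); last by left.
by right; apply: cdvd_decomp.
Qed.

Lemma cdvd_factor (c : R) (A : {poly R}) : cdvd c A ->
  A = c%:P * map_poly (fun u => u %/ c) A.
Proof.
move=> h; apply/polyP=> i; rewrite coefCM coef_map_id0 ?div0p //.
by rewrite divpKC.
Qed.

Lemma irr_div (c : R) : (1 < size c)%N -> exists q, irreducible_poly q /\ q %| c.
Proof.
move: {2}(size c) (leqnn (size c)) => N.
elim: N c => [|N IH] c hN hc; first by move: (leq_trans hc hN).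
case: (Classical_Prop.classic (irreducible_poly c)) => [ic|nic].
  by exists c; split.
have [d [d1 dc ndc]] : exists d : R, [/\ size d != 1%N, d %| c & ~~ (d %= c)].
  apply: Classical_Prop.NNPP => hne; apply: nic; split => // d d1 dc.
  apply/negPn/negP => ndc; apply: hne; exists d; split => //.
have c0 : c != 0 by rewrite -size_poly_eq0 -lt0n ltnW.
have d0 : d != 0 by apply: contraTneq dc => ->; rewrite dvd0p.
have sd : (size d < size c)%N.
  rewrite ltn_neqAle dvdp_leq // andbT.
  by rewrite dvdp_size_eqp.
have hdN : (size d <= N)%N by rewrite -ltnS (leq_trans sd hN).
have hd1 : (1 < size d)%N.
  by move: d1; rewrite ltn_neqAle eq_sym => ->; rewrite lt0n size_poly_eq0.
have [q [iq qd]] := IH d hdN hd1.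
by exists q; split => //; apply: dvdp_trans qd dc.
Qed.

Lemma unit_size1 (c : R) : (c \is a GRing.unit) = (size c == 1%N).
Proof.
rewrite poly_unitE unitfE; apply/andP/idP => [[]//|h]; split => //.
have ec := size1_polyC (eq_leq (eqP h)).
by apply/negP => /eqP e0; move: h; rewrite ec e0 size_poly0.
Qed.

Lemma split_lemma (c : R) (X Y Z : {poly R}) : c != 0 -> c%:P * X = Y * Z ->
  exists a b Y' Z', [/\ Y = a%:P * Y', Z = b%:P * Z', X = Y' * Z' & a * b = c].
Proof.
move: {2}(size c) (leqnn (size c)) => N.
elim: N c X Y Z => [|N IH] c X Y Z hN c0 hXYZ.
  by move: hN; rewrite leqn0 size_poly_eq0 (negPf c0).
have [hs|hs] := leqP (size c) 1%N.
  have cu : c \is a GRing.unit.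
    by rewrite unit_size1 eqn_leq hs lt0n size_poly_eq0.
  exists c, 1, (c^-1%:P * Y), Z; split.
  - by rewrite mulrA -polyCM divrr // polyC1 mul1r.
  - by rewrite polyC1 mul1r.
  - by rewrite -mulrA -hXYZ mulrA -polyCM mulVr // polyC1 mul1r.
  - by rewrite mulr1.
have [q [iq qc]] := irr_div hs.
have [c' cq] := dvdpP _ _ qc.
have q0 : q != 0 := irredp_neq0 iq.
have c'0 : c' != 0 by apply: contraNneq c0 => e; rewrite cq e mul0r.
have sc' : (size c' <= N)%N.
  rewrite -ltnS (leq_trans _ hN) // cq size_mul //.
  have := iq.1; have : (0 < size c')%N by rewrite lt0n size_poly_eq0.
  by move=> h1 h2; rewrite -subn1 -addnBA ?(ltnW h2) // -{1}[size c']addn0 ltn_add2l subn_gt0.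
have hq : cdvd q (Y * Z) by move=> i; rewrite -hXYZ coefCM dvdp_mulr.
have qP0 : q%:P != 0 :> {poly R} by rewrite polyC_eq0.
have [hY|hZ] := E_lemma iq hq.
  move: (cdvd_factor hY); set Y1 := map_poly _ Y => eY.
  have hX : c'%:P * X = Y1 * Z.
    apply: (mulfI qP0); rewrite mulrA -polyCM (mulrC q c') -cq hXYZ eY mulrA.
    by [].
  have [a1 [b [Y' [Z' [e1 e2 e3 e4]]]]] := IH c' X Y1 Z sc' c'0 hX.
  exists (q * a1), b, Y', Z'; split => //.
  - by rewrite eY e1 mulrA polyCM.
  - by rewrite -mulrA e4 cq mulrC.
move: (cdvd_factor hZ); set Z1 := map_poly _ Z => eZ.
have hX : c'%:P * X = Y * Z1.
  apply: (mulfI qP0); rewrite mulrA -polyCM (mulrC q c') -cq hXYZ eZ.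
  by rewrite mulrCA.
have [a [b1 [Y' [Z' [e1 e2 e3 e4]]]]] := IH c' X Y Z1 sc' c'0 hX.
exists a, (q * b1), Y', Z'; split => //.
- by rewrite eZ e2 mulrA polyCM.
- by rewrite mulrCA e4 cq mulrC.
Qed.


Lemma prim_of_irr (P : {poly R}) : irreducible2 P -> (1 < size P)%N ->
  forall a, cdvd a P -> a \is a GRing.unit.
Proof.
move=> [P0 Pnu Hirr] sP a ha.
have eP := cdvd_factor ha.
case: (Hirr _ _ eP) => u.
  by move: u; rewrite poly_unitE coefC /= => /andP[].
move: u; rewrite poly_unitE => /andP[/eqP s1 _].
have := size_mul_leq a%:P (map_poly (fun u => u %/ a) P).
rewrite -eP s1 size_polyC addn1 /=.
by case: (a != 0) => /= h; move: (leq_trans sP h).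
Qed.

Lemma G2 (P D C : {poly R}) (d : R) : irreducible2 P -> (1 < size P)%N ->
  d != 0 -> P * D = d%:P * C -> dvd2 P C.
Proof.
move=> iP sP d0 h.
have [a [b [P' [D' [eP eD eC eab]]]]] := split_lemma d0 (esym h).
have au : a \is a GRing.unit.
  by apply: (prim_of_irr iP sP) => i; rewrite eP coefCM dvdp_mulr.
exists (a^-1%:P * D').
by rewrite eC eP -mulrA (mulrCA P') (mulrA a%:P) -polyCM divrr // polyC1 mul1r.
Qed.

Lemma prime2 (P B C E : {poly R}) : irreducible2 P -> (1 < size P)%N ->
  B * C = P * E -> dvd2 P B \/ dvd2 P C.
Proof.
move=> iP sP hBC.
have [sB|sB] := leqP (size B) 1%N.
  have eB := size1_polyC sB.
  have [b0|b0] := eqVneq (B`_0) 0.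
    by left; exists 0; rewrite mulr0 eB b0.
  right; apply: (G2 iP sP b0); by rewrite -eB hBC.
have [[u v] /= _ hr] := resultant_in_ideal sP sB.
have [r0|r0] := eqVneq (resultant P B) 0; last first.
  right; apply: (G2 (D := u * C + v * E) iP sP r0).
  rewrite hr mulrDl mulrDr -(mulrA v) hBC.
  ring.
move: r0 => /eqP; rewrite resultant_eq0 => sg.
have [[c1 q1] /= c10 e1] := Pdiv.WeakIdomain.dvdpP _ _ (dvdp_gcdl P B).
have [[c2 q2] /= c20 e2] := Pdiv.WeakIdomain.dvdpP _ _ (dvdp_gcdr P B).
move: e1 e2; set g := gcdp P B => e1 e2.
rewrite -mul_polyC in e1; rewrite -mul_polyC in e2.
have [a [b [q' [g' [eq1 eg eP eab]]]]] := split_lemma c10 e1.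
have b0 : b != 0 by apply: contraNneq c10 => b0; rewrite -eab b0 mulr0.
have sg' : size g' = size g by rewrite eg size_Cmul.
case: iP => P0 Pnu Hirr.
case: (Hirr _ _ eP) => u'; last first.
  by move: u'; rewrite poly_unitE sg' => /andP[/eqP s1 _]; rewrite s1 in sg.
move: u'; rewrite poly_unitE => /andP[s1 wu].
have eq' := size1_polyC (eq_leq (eqP s1)).
left; apply: (G2 (D := q2 * b%:P * (q'`_0)^-1%:P) (And3 P0 Pnu Hirr) sP c20).
rewrite e2 eg eP eq' mulrC -!mulrA; congr (_ * _).
by rewrite coefC /= (mulrA (_^-1)%:P) -polyCM mulVr // polyC1 mul1r.
Qed.

End Gauss.

Section Scale.
Variable F : fieldType.
Notation R := {poly F}.

Definition sc (z : F) (A : {poly R}) : {poly R} := A \Po (z%:P *: 'X).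

Lemma coef_sc z A i : (sc z A)`_i = (z ^+ i)%:P * A`_i.
Proof.
elim/poly_ind: A i => [|A c IH] i; first by rewrite /sc comp_poly0 !coef0 mulr0.
rewrite /sc comp_poly_MXaddC coefD -scalerAr coefZ coefMX coefD coefMX coefC.
case: i => [|i] /=; first by rewrite mulr0 !add0r expr0 polyC1 mul1r.
by rewrite !addr0 -/(sc z A) IH mulrA -polyCM -exprS.
Qed.

Lemma sc_mul z A B : sc z (A * B) = sc z A * sc z B.
Proof. exact: comp_polyM. Qed.

Lemma sc_comp z w A : sc z (sc w A) = sc (z * w) A.
Proof. by apply/polyP=> i; rewrite !coef_sc mulrA -polyCM exprMn. Qed.

Lemma sc1 A : sc 1 A = A.
Proof. by apply/polyP=> i; rewrite coef_sc expr1n polyC1 mul1r. Qed.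

Lemma sc_horner0 z A : (sc z A).[0] = A.[0].
Proof. by rewrite !horner_coef0 coef_sc expr0 polyC1 mul1r. Qed.

Lemma size_sc_leq z A : (size (sc z A) <= size A)%N.
Proof. by apply/leq_sizeP => i hi; rewrite coef_sc (nth_default _ hi) mulr0. Qed.

Lemma size_sc z A : z != 0 -> size (sc z A) = size A.
Proof.
move=> z0; apply/eqP; rewrite eqn_leq size_sc_leq /=.
have {1}-> : A = sc z^-1 (sc z A) by rewrite sc_comp mulVf // sc1.
exact: size_sc_leq.
Qed.

Lemma sc_inv (Q : {poly R}) t z : (0 < t)%N -> z ^+ t = 1 ->
  sc z (Q \Po 'X^t) = Q \Po 'X^t.
Proof.
move=> t0 zt; apply/polyP=> i; rewrite coef_sc coef_comp_poly_Xn //.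
case: dvdnP => [[k ->]|_]; last by rewrite mulr0.
by rewrite mulnC exprM zt expr1n polyC1 mul1r.
Qed.

Lemma prime_sc (P : {poly R}) z : z != 0 -> irreducible2 P -> (1 < size P)%N ->
  forall B C E, B * C = sc z P * E -> dvd2 (sc z P) B \/ dvd2 (sc z P) C.
Proof.
move=> z0 iP sP B C E h.
have h' : sc z^-1 B * sc z^-1 C = P * sc z^-1 E.
  by rewrite -!sc_mul h sc_mul sc_comp mulVf // sc1.
have back : forall X, dvd2 P (sc z^-1 X) -> dvd2 (sc z P) X.
  move=> X [K hK]; exists (sc z K).
  by rewrite -sc_mul -hK sc_comp mulfV // sc1.
by case: (prime2 iP sP h') => [/back|/back]; [left|right].
Qed.

End Scale.

Theorem lemma2 (p : nat) (Hp : prime p) (t m n : nat)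
  (Ht : (0 < t)%N) (Htp : (t %| p.-1)%N)
  (Q P : {poly {poly 'F_p}})
  (Hirr : irreducible2 P)
  (Hn : (1 <= n)%N) (HsizeP : size P = n.+1)
  (Hm : forall i : nat, (size (P`_i)%R <= m.+1)%N)
  (Hdvd : dvd2 P (Q \Po 'X^t)) :
  (P.[0] ^+ (t %/ n)%N %| Q.[0])%R.
Proof.
set H := Q \Po 'X^t.
have [C hC] := Hdvd.
have sP : (1 < size P)%N by rewrite HsizeP ltnS.
have hQ0 : Q.[0] = H.[0].
  by rewrite !horner_coef0 coef_comp_poly_Xn // dvdn0 div0n.
have [f0|f0] := eqVneq (P`_0) 0.
  case k: (t %/ n)%N => [|k']; first by rewrite expr0 dvd1p.
  rewrite horner_coef0 f0 exprS mul0r dvd0p hQ0 /H hC hornerM horner_coef0 f0 mul0r.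
  by [].
have [z pz] : exists z : 'F_p, t.-primitive_root z.
  by apply: exists_prim_root => //; rewrite card_Fp.
have z0 : z != 0 by rewrite (prim_root_eq0 pz) -lt0n.
pose Pk k := sc (z ^+ k) P.
have zk0 : forall k, z ^+ k != 0 by move=> k; rewrite expf_neq0.
have PkH : forall k, dvd2 (Pk k) H.
  move=> k; exists (sc (z ^+ k) C).
  by rewrite -sc_mul -hC sc_inv // exprAC (prim_expr_order pz) expr1n.
have sPk : forall k, size (Pk k) = n.+1 by move=> k; rewrite size_sc.
have fn0 : P`_n != 0.
  have : lead_coef P != 0 by rewrite lead_coef_eq0 -size_poly_eq0 HsizeP.
  by rewrite lead_coefE HsizeP.
have bnd : forall j, (j < t %/ n)%N -> (j * n < t)%N.
  move=> j; rewrite leq_divRL // => h.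
  by apply: leq_trans h; rewrite mulSn -addn1 addnC leq_add2r.
have noassoc : forall j' j, (j' < j)%N -> (j < t %/ n)%N -> ~ dvd2 (Pk j) (Pk j').
  move=> j' j jj jr [E hE].
  have E0 : E != 0.
    by apply/eqP => E00; move: (sPk j'); rewrite hE E00 mulr0 size_poly0.
  have sE : size E = 1%N.
    move: (sPk j'); rewrite hE size_mul ?(sPk j) //; last by rewrite -size_poly_eq0 sPk.
    have : (0 < size E)%N by rewrite lt0n size_poly_eq0.
    by rewrite addSn /= -[n.+1]addn1 => _ /eqP; rewrite eqn_add2l => /eqP.
  have eE := size1_polyC (eq_leq sE).
  set e := E`_0 in eE.
  have c0 := congr1 (fun A : {poly {poly 'F_p}} => A`_0) hE.
  have cn := congr1 (fun A : {poly {poly 'F_p}} => A`_n) hE.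
  rewrite /= eE !coefMC !coef_sc !expr0 polyC1 !mul1r in c0.
  rewrite /= eE !coefMC !coef_sc in cn.
  have e1 : e = 1 by apply: (mulfI f0); rewrite mulr1.
  rewrite e1 mulr1 in cn.
  have := mulIf fn0 cn => /polyC_inj /eqP.
  rewrite -!exprM (eq_prim_root_expr pz) !modn_small ?bnd //; last first.
    exact: ltn_trans jj jr.
  rewrite eqn_mul2r (gtn_eqF Hn) /= => /eqP ej.
  by move: jj; rewrite ej ltnn.
have nodiv : forall j, (j < t %/ n)%N -> forall j', (j' <= j)%N ->
    ~ dvd2 (Pk j) (\prod_(k < j') Pk k).
  move=> j jr; elim=> [|j' IH] hj [E hE].
    move: hE; rewrite big_ord0 => hE.
    have E0 : E != 0 by apply/eqP => E00; move: hE; rewrite E00 mulr0; apply/eqP; rewrite oner_neq0.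
    move: (congr1 (fun A : {poly {poly 'F_p}} => size A) hE) => /=; rewrite size_poly1 size_mul ?sPk //; last first.
      by rewrite -size_poly_eq0 sPk.
    have : (0 < size E)%N by rewrite lt0n size_poly_eq0.
    rewrite addSn /=; case: (size E) => // s _; rewrite addnS => -[] e.
    by move/eqP: e; rewrite eq_sym addn_eq0 => /andP[/eqP n0 _]; rewrite n0 in Hn.
  move: hE; rewrite big_ord_recr /= => hE.
  have zj0 := zk0 j.
  case: (prime_sc zj0 Hirr sP hE) => h.
    by apply: (IH (ltnW hj)).
  by apply: (noassoc j' j hj jr).
have claim : forall j, (j <= t %/ n)%N -> dvd2 (\prod_(k < j) Pk k) H.
  elim=> [|j IH] hj; first by exists H; rewrite big_ord0 mul1r.
  have [C' hC'] := IH (ltnW hj).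
  have [E hE] := PkH j.
  have e : \prod_(k < j) Pk k * C' = Pk j * E by rewrite -hC' -hE.
  case: (prime_sc (zk0 j) Hirr sP e) => h.
    by case: (nodiv j hj j (leqnn j) h).
  case: h => [C'' hC''].
  by exists C''; rewrite big_ord_recr /= hC' hC'' mulrA.
have [D hD] := claim _ (leqnn _).
rewrite hQ0 hD hornerM horner_prod.
under eq_bigr do rewrite sc_horner0.
by rewrite prodr_const card_ord dvdp_mulr.
Qed.
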